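(* Let $M_g$ be an $n\times n$ real matrix and $a_1\in\mathbb R^n$ a unit vector, and suppose $M_g=c\,a_1a_1^\top+N$ with $|c|\ge(1+\beta)\|N\|$ for some $\beta>0$, and $\|Na_1\|,\|N^\top a_1\|\le\epsilon|c|$, where $\frac{2\epsilon(1+\beta)}{\beta}<0.01$. Then, letting $u$ be a top singular vector of $M_g$, $\langle u,a_1\rangle^2\ge 0.99$.
   Context: $\|\cdot\|$ denotes the spectral norm of a matrix and the Euclidean norm of a vector. A top singular vector is a unit singular vector corresponding to the largest singular value. *)

(* Defs.v *)
From HB Require Import structures.
From mathcomp Require Import all_boot all_order all_algebra.
From mathcomp Require Import boolp classical_sets reals.
Set Implicit Arguments. Unset Strict Implicit. Unset Printing Implicit Defensive.
Import Order.TTheory GRing.Theory Num.Theory.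
Local Open Scope ring_scope.
Local Open Scope classical_set_scope.

Definition vnorm (R : realType) (n : nat) (v : 'cV[R]_n) : R :=
  Num.sqrt (\sum_(i < n) v i 0 ^+ 2).

Definition vdot (R : realType) (n : nat) (u v : 'cV[R]_n) : R :=
  \sum_(i < n) u i 0 * v i 0.

Definition specnorm (R : realType) (m n : nat) (A : 'M[R]_(m, n)) : R :=
  sup [set vnorm (A *m v) | v in [set v : 'cV[R]_n | vnorm v = 1]].

(* u is a top singular vector of M: a unit vector that is a (right or left)
   singular vector for the largest singular value sigma_max = ||M||,
   i.e. M^T M u = sigma_max^2 u (right) or M M^T u = sigma_max^2 u (left). *)
Definition top_singular_vector (R : realType) (n : nat) (M : 'M[R]_n)
    (u : 'cV[R]_n) : Prop :=
  vnorm u = 1 /\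
  ((M^T *m M *m u = (specnorm M ^+ 2) *: u) \/
   (M *m M^T *m u = (specnorm M ^+ 2) *: u)).

(* Main.v *)
Require Import Defs.
From HB Require Import structures.
From mathcomp Require Import all_boot all_order all_algebra.
From mathcomp Require Import boolp classical_sets reals.
From mathcomp Require Import ring lra.
Import Order.TTheory GRing.Theory Num.Theory.
Local Open Scope ring_scope.
Section Vec.
Variables (R : realType) (n : nat).
Implicit Types (u v w z : 'cV[R]_n) (A : 'M[R]_n).

Lemma vdotC u v : vdot u v = vdot v u.
Proof. by rewrite /vdot; apply: eq_bigr => i _; rewrite mulrC. Qed.

Lemma vdotDl u v w : vdot (u + v) w = vdot u w + vdot v w.
Proof. by rewrite /vdot -big_split; apply: eq_bigr => i _; rewrite !mxE mulrDl. Qed.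

Lemma vdotDr u v w : vdot w (u + v) = vdot w u + vdot w v.
Proof. by rewrite vdotC vdotDl !(vdotC w). Qed.

Lemma vdotZl k u v : vdot (k *: u) v = k * vdot u v.
Proof. by rewrite /vdot mulr_sumr; apply: eq_bigr => i _; rewrite !mxE mulrA. Qed.

Lemma vdotZr k u v : vdot v (k *: u) = k * vdot v u.
Proof. by rewrite vdotC vdotZl vdotC. Qed.

Lemma vdotNl u v : vdot (- u) v = - vdot u v.
Proof. by rewrite -scaleN1r vdotZl mulN1r. Qed.

Lemma vdotNr u v : vdot v (- u) = - vdot v u.
Proof. by rewrite vdotC vdotNl vdotC. Qed.

Lemma vdotE u v : vdot u v = (u^T *m v) 0 0.
Proof. by rewrite !mxE; apply: eq_bigr => i _; rewrite !mxE. Qed.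

Lemma vdot_mul A u v : vdot (A *m u) v = vdot u (A^T *m v).
Proof. by rewrite !vdotE trmx_mul mulmxA. Qed.

Lemma vdot_ge0 u : 0 <= vdot u u.
Proof. by apply: sumr_ge0 => i _; rewrite -expr2 sqr_ge0. Qed.

Lemma vnormE u : vnorm u = Num.sqrt (vdot u u).
Proof. by rewrite /vnorm /vdot; congr Num.sqrt; apply: eq_bigr => i _; rewrite expr2. Qed.

Lemma vnorm_ge0 u : 0 <= vnorm u.
Proof. by rewrite vnormE sqrtr_ge0. Qed.

Lemma vnorm_sqr u : vnorm u ^+ 2 = vdot u u.
Proof. by rewrite vnormE sqr_sqrtr // vdot_ge0. Qed.

Lemma quad u v x y : vdot (x *: u + y *: v) (x *: u + y *: v) =
  x ^+ 2 * vdot u u + 2 * x * y * vdot u v + y ^+ 2 * vdot v v.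
Proof.
rewrite !vdotDl !vdotDr !vdotZl !vdotZr (vdotC v u).
by ring.
Qed.

Lemma CS_sq u v : vdot u v ^+ 2 <= vdot u u * vdot v v.
Proof.
have h1 := vdot_ge0 (vdot v v *: u + (- vdot u v) *: v).
have h2 := vdot_ge0 (vdot u v *: u + (- vdot u u) *: v).
have h3 := vdot_ge0 (1 *: u + 1 *: v).
have h4 := vdot_ge0 (1 *: u + (-1) *: v).
rewrite !quad in h1 h2 h3 h4.
have hA := vdot_ge0 u; have hB := vdot_ge0 v.
set A := vdot u u in h1 h2 h3 h4 hA *; set B := vdot v v in h1 h2 h3 h4 hB *.
set D := vdot u v in h1 h2 h3 h4 *. clearbody A B D.
have [A0|A0] := eqVneq A 0.
  have [B0|B0] := eqVneq B 0.
    rewrite A0 B0 in h3 h4 *.  nra.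
  have Bp : 0 < B by rewrite lt0r B0.
  have h5 : 0 <= B * (A * B - D ^+ 2) by move: h1; congr (_ <= _); ring.
  rewrite -subr_ge0; move: h5; rewrite pmulr_rge0 //.
have Ap : 0 < A by rewrite lt0r A0.
have h5 : 0 <= A * (A * B - D ^+ 2) by move: h2; congr (_ <= _); ring.
rewrite -subr_ge0; move: h5; rewrite pmulr_rge0 //.
Qed.

Lemma le_sqr (x y : R) : 0 <= y -> x ^+ 2 <= y ^+ 2 -> x <= y.
Proof. move=> y0 h; apply: le_trans (ler_norm x) _.
have := @ler_sqr R `|x| y; rewrite !nnegrE normr_ge0 y0 => /(_ isT isT) <-.
by rewrite (real_normK (num_real _)). Qed.

Lemma CSabs u v : `|vdot u v| <= vnorm u * vnorm v.
Proof.
apply: le_sqr; first by rewrite mulr_ge0 ?vnorm_ge0.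
by rewrite (real_normK (num_real _)) exprMn !vnorm_sqr CS_sq.
Qed.

Lemma CS u v : vdot u v <= vnorm u * vnorm v.
Proof. exact: le_trans (ler_norm _) (CSabs u v). Qed.

Lemma vnormD u v : vnorm (u + v) <= vnorm u + vnorm v.
Proof.
apply: le_sqr; first by rewrite addr_ge0 ?vnorm_ge0.
have := CS u v; rewrite vnorm_sqr -(scale1r u) -(scale1r v) quad !scale1r.
rewrite -!vnorm_sqr; nra.
Qed.

Lemma vnormZ k u : vnorm (k *: u) = `|k| * vnorm u.
Proof.
by rewrite !vnormE vdotZl vdotZr mulrA -expr2 sqrtrM ?sqr_ge0 // sqrtr_sqr.
Qed.

Lemma vnormN u : vnorm (- u) = vnorm u.
Proof. by rewrite -scaleN1r vnormZ normrN normr1 mul1r. Qed.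

Lemma vnormB u v : vnorm (u - v) <= vnorm u + vnorm v.
Proof. by rewrite -(vnormN v) vnormD. Qed.

Lemma proj_le a z : vnorm a = 1 -> vnorm (z - vdot a z *: a) <= vnorm z.
Proof.
move=> a1; apply: le_sqr; first exact: vnorm_ge0.
have aa : vdot a a = 1 by rewrite -vnorm_sqr a1 expr1n.
rewrite !vnorm_sqr.
have -> : z - vdot a z *: a = 1 *: z + (- vdot a z) *: a by rewrite scale1r scaleNr.
rewrite quad aa (vdotC z a); have := sqr_ge0 (vdot a z); nra.
Qed.


Lemma entry_le z j : `|z j 0| <= vnorm z.
Proof.
apply: le_sqr; first exact: vnorm_ge0.
rewrite (real_normK (num_real _)) vnorm_sqr /vdot (bigD1 j) //= expr2 lerDl.
by apply: sumr_ge0 => i _; rewrite -expr2 sqr_ge0.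
Qed.

Definition Fb A := \sum_i \sum_j `|A i j|.

Lemma sq_le (x K : R) : `|x| <= K -> x * x <= K ^+ 2.
Proof.
move=> h; have h0 := normr_ge0 x; have := real_normK (num_real x).
move=> e; rewrite -expr2 -e; nra.
Qed.

Lemma mul_bound A z : vnorm (A *m z) ^+ 2 <= n%:R * (Fb A * vnorm z) ^+ 2.
Proof.
rewrite vnorm_sqr /vdot.
apply: le_trans (_ : \sum_(i < n) (Fb A * vnorm z) ^+ 2 <= _); last first.
  by rewrite sumr_const card_ord mulr_natl.
apply: ler_sum => i _; apply: sq_le.
rewrite mxE; apply: le_trans (ler_norm_sum _ _ _) _.
apply: le_trans (_ : \sum_(j < n) `|A i j| * vnorm z <= _).
  apply: ler_sum => j _; rewrite normrM; apply: ler_wpM2l; first exact: normr_ge0.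
  exact: entry_le.
rewrite -mulr_suml; apply: ler_wpM2r; first exact: vnorm_ge0.
rewrite /Fb [X in _ <= X](bigD1 i) //= lerDl; apply: sumr_ge0 => k _.
by apply: sumr_ge0 => j _; exact: normr_ge0.
Qed.

Lemma spec_ubound A :
  has_ubound [set vnorm (A *m v) | v in [set v : 'cV[R]_n | vnorm v = 1]].
Proof.
exists (1 + n%:R * Fb A ^+ 2) => x [v /= v1 <-].
have := mul_bound A v; rewrite v1 mulr1 => h.
have h0 := vnorm_ge0 (A *m v).
have h1 : 0 <= n%:R * Fb A ^+ 2 by rewrite mulr_ge0 ?ler0n ?sqr_ge0.
nra.
Qed.

Lemma spec_lb A a : vnorm a = 1 -> vnorm (A *m a) <= specnorm A.
Proof.
move=> a1; apply: sup_upper_bound; last by exists a.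
by split; [exists (vnorm (A *m a)); exists a | exact: spec_ubound].
Qed.

Lemma spec_ub A z : vnorm (A *m z) <= specnorm A * vnorm z.
Proof.
have [z0|z0] := eqVneq (vnorm z) 0.
  have := mul_bound A z; rewrite z0 mulr0 expr0n mulr0 /= => h.
  have h0 := vnorm_ge0 (A *m z).
  rewrite mulr0; nra.
have zp : 0 < vnorm z by rewrite lt0r z0 vnorm_ge0.
set v := (vnorm z)^-1 *: z.
have v1 : vnorm v = 1.
  by rewrite /v vnormZ ger0_norm ?invr_ge0 ?vnorm_ge0 // mulVf.
have := @spec_lb A v v1; rewrite /v -scalemxAr vnormZ ger0_norm ?invr_ge0 ?vnorm_ge0 //.
by rewrite mulrC ler_pdivrMr.
Qed.

Lemma specT A z : vnorm (A^T *m z) <= specnorm A * vnorm z.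
Proof.
have hk : 0 <= specnorm A * vnorm z.
  exact: le_trans (vnorm_ge0 (A *m z)) (spec_ub A z).
set y := vnorm (A^T *m z).
have h : y ^+ 2 <= vnorm z * (specnorm A * y).
  rewrite /y vnorm_sqr vdot_mul trmxK vdotC.
  apply: le_trans (CS _ _) _; rewrite [X in _ <= X]mulrC; apply: ler_wpM2r; first exact: vnorm_ge0.
  exact: spec_ub.
have y0 : 0 <= y by exact: vnorm_ge0.
move: h; rewrite mulrA (mulrC (vnorm z)); nra.
Qed.

Lemma mul_rank1 a u : a *m (a^T *m u) = vdot a u *: a.
Proof.
apply/matrixP => i j; rewrite !mxE big_ord1 (ord1 j) mulrC; congr (_ * _).
by rewrite vdotE.
Qed.

Lemma num_core (C sg s e b r : R) : 0 < C -> 0 < b -> 0 <= sg -> 0 <= e -> 0 <= r ->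
  (1 + b) * sg <= C -> C - e * C <= s -> s ^+ 2 * r <= sg ^+ 2 * r + sg * e * C + s * e * C ->
  2 * e * (1 + b) / b < 1 / 100 -> r ^+ 2 <= 1 / 100.
Proof.
move=> C0 b0 sg0 e0 r0 hsg hs hY hq.
have hq' : 200 * (e * (1 + b)) < b.
  move: hq; rewrite ltr_pdivrMr // => hq; lra.
have hE : C * (200 * (e * (1 + b))) <= C * b by rewrite ler_pM2l // ltW.
have hs1 : (1 + b) * (C - e * C) <= (1 + b) * s by rewrite ler_pM2l //; lra.
have hd : 199 * C * b <= 200 * ((1 + b) * (s - sg)) by nra.
have sp : 0 < s - sg.
  have : 0 < 200 * ((1 + b) * (s - sg)) by apply: lt_le_trans hd; rewrite !mulr_gt0.
  rewrite pmulr_rgt0 // pmulr_rgt0 //; lra.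
have hY2 : (s + sg) * (r * (s - sg) - e * C) <= 0 by move: hY; rewrite -subr_ge0 => hY; rewrite -oppr_ge0; move: hY; congr (_ <= _); ring.
have hr : r * (s - sg) <= e * C.
  rewrite -subr_le0; move: hY2; rewrite pmulr_rle0 //; lra.
have h3 : r * (199 * C * b) <= r * (200 * ((1 + b) * (s - sg))) by rewrite ler_wpM2l.
have h4 : 199 * r * C * b <= 200 * (1 + b) * (e * C) by nra.
have h5 : 199 * r * C * b <= C * b by nra.
have h6 : 199 * r <= 1.
  have : 0 < C * b by rewrite mulr_gt0.
  move=> Cb; rewrite -(ler_pM2r Cb) mul1r; move: h5; congr (_ <= _); ring.
nra.
Qed.



Lemma core (M N : 'M[R]_n) (a u : 'cV[R]_n) (c sg s e b : R) :
  vnorm a = 1 -> M = c *: (a *m a^T) + N -> c != 0 -> 0 < b ->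
  (1 + b) * sg <= `|c| -> vnorm (N *m a) <= e * `|c| -> vnorm (N^T *m a) <= e * `|c| ->
  2 * e * (1 + b) / b < 1 / 100 ->
  (forall z, vnorm (N *m z) <= sg * vnorm z) ->
  (forall z, vnorm (N^T *m z) <= sg * vnorm z) ->
  vnorm (M *m a) <= s -> vnorm u = 1 -> M^T *m M *m u = (s ^+ 2) *: u ->
  99 / 100 <= vdot u a ^+ 2.
Proof.
move=> a1 hM c0 b0 hsg hNa hNTa hq hN hNT hs u1 heig.
have aa : vdot a a = 1 by rewrite -vnorm_sqr a1 expr1n.
have uu : vdot u u = 1 by rewrite -vnorm_sqr u1 expr1n.
have C0 : 0 < `|c| by rewrite normr_gt0.
have s0 : 0 <= s := le_trans (vnorm_ge0 _) hs.
have sg0 : 0 <= sg.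
  have := hN a; rewrite a1 mulr1; exact: le_trans (vnorm_ge0 _).
have e0 : 0 <= e.
  have := le_trans (vnorm_ge0 _) hNa; rewrite pmulr_lge0 //.
rewrite vdotC; set t := vdot a u.
set w := u - t *: a.
have hw : vnorm w ^+ 2 = 1 - t ^+ 2.
  rewrite vnorm_sqr.
  have -> : w = 1 *: u + (- t) *: a by rewrite scale1r scaleNr.
  rewrite quad uu aa (vdotC u a) -/t; ring.
have ut : u = w + t *: a by rewrite /w subrK.
have t1 : `|t| <= 1.
  apply: le_sqr => //; rewrite (real_normK (num_real _)) expr1n.
  have := sqr_ge0 (vnorm w); rewrite hw; lra.
have hMv : forall v, M *m v = c *: (vdot a v *: a) + N *m v.
  by move=> v; rewrite hM mulmxDl -scalemxAl -mulmxA mul_rank1.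
set x := M *m u.
set al := vdot a x.
have hal : al = c * t + vdot a (N *m u).
  by rewrite /al /x hMv vdotDr !vdotZr aa mulr1.
have hy : x - al *: a = N *m u - vdot a (N *m u) *: a.
  rewrite /x hMv hal scalerDl -scalerA opprD addrA (addrC (c *: (t *: a))) addrK //.
set y := x - al *: a.
have hNu : vnorm (N *m u) <= sg * vnorm w + e * `|c|.
  rewrite {1}ut mulmxDr -scalemxAr.
  apply: le_trans (vnormD _ _) _; apply: lerD; first exact: hN.
  rewrite vnormZ; apply: le_trans (_ : 1 * vnorm (N *m a) <= _).
    by apply: ler_wpM2r => //; exact: vnorm_ge0.
  by rewrite mul1r.
have Y1 : vnorm y <= sg * vnorm w + e * `|c|.
  by rewrite /y hy; apply: le_trans (proj_le a _ a1) hNu.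
have hMT : M^T = c *: (a *m a^T) + N^T.
  by rewrite hM linearD /= linearZ /= trmx_mul trmxK.
have heig2 : s ^+ 2 *: u = c *: (al *: a) + N^T *m x.
  by rewrite -heig -mulmxA -/x hMT mulmxDl -scalemxAl -mulmxA mul_rank1.
have hst : s ^+ 2 * t = c * al + vdot a (N^T *m x).
  by rewrite /t -vdotZr heig2 vdotDr !vdotZr aa mulr1.
have hsw : s ^+ 2 *: w = N^T *m x - vdot a (N^T *m x) *: a.
  rewrite /w scalerBr scalerA hst heig2 scalerDl -scalerA opprD addrA.
  by rewrite (addrC (c *: (al *: a))) addrK.
have xs : vnorm x <= s.
  apply: le_sqr => //; rewrite vnorm_sqr /x vdot_mul.
  by rewrite mulmxA heig vdotZr uu mulr1.
have hal2 : `|al| <= s.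
  apply: le_trans (CSabs _ _) _; rewrite a1 mul1r //.
have xy : x = y + al *: a by rewrite /y subrK.
have Y2 : s ^+ 2 * vnorm w <= sg * vnorm y + s * (e * `|c|).
  have -> : s ^+ 2 * vnorm w = vnorm (s ^+ 2 *: w).
    by rewrite vnormZ ger0_norm // sqr_ge0.
  rewrite hsw; apply: le_trans (proj_le a _ a1) _.
  rewrite {1}xy mulmxDr -scalemxAr.
  apply: le_trans (vnormD _ _) _; apply: lerD; first exact: hNT.
  rewrite vnormZ; apply: ler_pM; [exact: normr_ge0 | exact: vnorm_ge0 | exact: hal2 | exact: hNTa].
have hMa : M *m a = c *: a + N *m a by rewrite hMv aa scale1r.
have hs2 : `|c| - e * `|c| <= s.
  apply: le_trans hs.
  have h1 : `|vdot a (M *m a)| <= vnorm (M *m a) by apply: le_trans (CSabs _ _) _; rewrite a1 mul1r.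
  apply: le_trans h1.
  rewrite hMa vdotDr vdotZr aa mulr1.
  have h2 : `|vdot a (N *m a)| <= e * `|c|.
    by apply: le_trans (CSabs _ _) _; rewrite a1 mul1r.
  have h3 : `|c| <= `|c + vdot a (N *m a)| + `|vdot a (N *m a)|.
    by rewrite -{1}(addrK (vdot a (N *m a)) c); exact: ler_normB.
  lra.
have r0 := vnorm_ge0 w.
have hY : s ^+ 2 * vnorm w <= sg ^+ 2 * vnorm w + sg * e * `|c| + s * e * `|c|.
  have := ler_wpM2l sg0 Y1; nra.
have := @num_core _ _ _ _ _ _ C0 b0 sg0 e0 r0 hsg hs2 hY hq.
rewrite hw; lra.
Qed.

End Vec.

Theorem mainTheorem6 (R : realType) (n : nat) (Mg N : 'M[R]_n)
    (a1 : 'cV[R]_n) (c beta eps : R) :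
  vnorm a1 = 1 ->
  Mg = c *: (a1 *m a1^T) + N ->
  c != 0 ->
  0 < beta ->
  (1 + beta) * specnorm N <= `|c| ->
  vnorm (N *m a1) <= eps * `|c| ->
  vnorm (N^T *m a1) <= eps * `|c| ->
  2 * eps * (1 + beta) / beta < 1 / 100 ->
  forall u : 'cV[R]_n, top_singular_vector Mg u ->
    vdot u a1 ^+ 2 >= 99 / 100.
Proof.
move=> ha hM c0 b0 hsg hNa hNTa hq u [u1 [heig|heig]].
  exact: (@core _ _ _ _ _ _ _ _ _ _ _ ha hM c0 b0 hsg hNa hNTa hq (@spec_ub _ _ N) (@specT _ _ N) (@spec_lb _ _ Mg _ ha) u1 heig).
have hMT : Mg^T = c *: (a1 *m a1^T) + N^T.
  by rewrite hM linearD /= linearZ /= trmx_mul trmxK.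
have hNTa' : vnorm (N^T^T *m a1) <= eps * `|c| by rewrite trmxK.
have hNT' : forall z, vnorm (N^T^T *m z) <= specnorm N * vnorm z.
  by move=> z; rewrite trmxK; exact: spec_ub.
have hs : vnorm (Mg^T *m a1) <= specnorm Mg.
  by have := @specT _ _ Mg a1; rewrite ha mulr1.
have heig' : Mg^T^T *m Mg^T *m u = specnorm Mg ^+ 2 *: u by rewrite trmxK.
exact: (@core _ _ _ _ _ _ _ _ _ _ _ ha hMT c0 b0 hsg hNTa hNTa' hq (@specT _ _ N) hNT' hs u1 heig').
Qed.
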